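(* Let $G$ and $G'$ be connected graphs of bounded degree which are quasi-isometric. If $G$ is extraterrestrial, then $G'$ is extraterrestrial.
   Context: A graph $G=(V,E)$ has undirected edges; $d_G$ is the shortest-path metric on $V$. A path of length $n$ is a sequence $w_0,\dots,w_n$ of distinct vertices with consecutive ones adjacent. For finite $A,B\subseteq V$, a matching is a relation $M\subseteq A\times B$ whose two coordinate projections are injective; it is complete if it induces a bijection $A\to B$; it is by paths of length at most $k$ if $d_G(u,v)\le k$ for every $(u,v)\in M$. For integers $m,k,r\ge 0$, an $(m,k,r)$-UFO in $G$ is a triple $(U,F,O)$ of pairwise disjoint finite subsets of $V$, with $U$ nonempty, such that: (1) $|U|\ge m|F|$; (2) there is a complete matching between $U$ and $O$ by paths of length at most $k$; (3) every path in $G$ from a vertex of $U$ to a vertex of $O$ either contains a vertex of $F$ or has length at least $r$. A graph $G$ is extraterrestrial if for every $m\in\mathbb N$ there exists $k\in\mathbb N$ such that for every $r\in\mathbb N$ there exists an $(m,k,r)$-UFO in $G$. Graphs $G=(V,E)$, $G'=(V',E')$ are quasi-isometric if there are $f:V\to V'$ and constants $A,B,C>0$ with $\frac1A d_G(v_1,v_2)-B\le d_{G'}(f(v_1),f(v_2))\le A d_G(v_1,v_2)+B$ for all $v_1,v_2\in V$, and every $v'\in V'$ is at $d_{G'}$-distance at most $C$ from $f(V)$. *)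

(* Defs.v *)
From Stdlib Require Import Reals Lra Lia List Arith.
Import ListNotations.
Open Scope R_scope.

Section Graphs.
Context {V : Type} (adj : V -> V -> Prop).

Definition simple_graph : Prop :=
  (forall u v, adj u v -> adj v u) /\ (forall v, ~ adj v v).

Fixpoint chain (p : list V) : Prop :=
  match p with
  | [] => True
  | x :: q => match q with
              | [] => True
              | y :: _ => adj x y /\ chain q
              end
  end.

Definition is_path_from_to (p : list V) (u v : V) : Prop :=
  NoDup p /\ chain p /\ hd_error p = Some u /\ last p u = v /\ p <> [].

Definition path_length (p : list V) : nat := Nat.pred (length p).

Definition is_dist (u v : V) (n : nat) : Prop :=
  (exists p, is_path_from_to p u v /\ path_length p = n) /\
  (forall p, is_path_from_to p u v -> (n <= path_length p)%nat).

Definition dist_le (u v : V) (k : nat) : Prop :=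
  exists p, is_path_from_to p u v /\ (path_length p <= k)%nat.

Definition connected : Prop :=
  forall u v, exists p, is_path_from_to p u v.

Definition bounded_degree : Prop :=
  exists D : nat, forall v (l : list V), NoDup l ->
    (forall w, In w l -> adj v w) -> (length l <= D)%nat.

(* finite subsets of V are represented by duplicate-free lists *)
Definition disjoint (A B : list V) : Prop := forall x, In x A -> ~ In x B.

(* complete matching between A and B by paths of length at most k:
   a relation M ⊆ A × B with injective coordinate projections that
   induces a bijection A -> B, with d(u,v) <= k for (u,v) ∈ M *)
Definition complete_matching_le (A B : list V) (k : nat) : Prop :=
  exists M : V -> V -> Prop,
    (forall a b, M a b -> In a A /\ In b B) /\
    (forall a b b', M a b -> M a b' -> b = b') /\
    (forall a a' b, M a b -> M a' b -> a = a') /\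
    (forall a, In a A -> exists b, M a b) /\
    (forall b, In b B -> exists a, M a b) /\
    (forall a b, M a b -> dist_le a b k).

Definition is_UFO (m k r : nat) (U F O : list V) : Prop :=
  NoDup U /\ NoDup F /\ NoDup O /\
  disjoint U F /\ disjoint U O /\ disjoint F O /\
  U <> [] /\
  (m * length F <= length U)%nat /\
  complete_matching_le U O k /\
  (forall p u o, In u U -> In o O -> is_path_from_to p u o ->
     (exists x, In x p /\ In x F) \/ (r <= path_length p)%nat).

Definition extraterrestrial : Prop :=
  forall m : nat, exists k : nat, forall r : nat,
    exists U F O : list V, is_UFO m k r U F O.

End Graphs.

Definition quasi_isometric {V V' : Type} (adj : V -> V -> Prop)
  (adj' : V' -> V' -> Prop) : Prop :=
  exists (f : V -> V') (A B C : R), 0 < A /\ 0 < B /\ 0 < C /\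
    (forall v1 v2 n n', is_dist adj v1 v2 n ->
       is_dist adj' (f v1) (f v2) n' ->
       INR n / A - B <= INR n' /\ INR n' <= A * INR n + B) /\
    (forall v', exists v n, is_dist adj' v' (f v) n /\ INR n <= C).

(* Main.v *)
Require Import Defs.
From Stdlib Require Import Reals List Arith Lia Lra ClassicalEpsilon Classical.
Import ListNotations.
Local Open Scope bool_scope.
Local Open Scope nat_scope.
Section G.
Context {V : Type} (adj : V -> V -> Prop).
Context (Hsym : forall u v, adj u v -> adj v u).

Inductive wk (Av : V -> Prop) : V -> V -> nat -> Prop :=
| wk0 u : ~ Av u -> wk Av u u 0
| wkS u x v n : adj u x -> ~ Av u -> wk Av x v n -> wk Av u v (S n).

Definition dleS (Av : V -> Prop) u v N := exists n, n <= N /\ wk Av u v n.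
Definition noav : V -> Prop := fun _ => False.
Definition dle u v N := dleS noav u v N.

Lemma wk_start Av u v n : wk Av u v n -> ~ Av u.
Proof. destruct 1; auto. Qed.
Lemma wk_end Av u v n : wk Av u v n -> ~ Av v.
Proof. induction 1; auto. Qed.

Lemma wk_trans Av u v w n m : wk Av u v n -> wk Av v w m -> wk Av u w (n + m).
Proof. induction 1; intros; simpl; auto. econstructor; eauto. Qed.

Lemma wk_snoc Av u v w n : wk Av u v n -> adj v w -> ~ Av w -> wk Av u w (S n).
Proof.
  intros H1 H2 H3. replace (S n) with (n + 1) by lia. eapply wk_trans; eauto.
  econstructor; eauto. eapply wk_end; eauto. constructor; auto.
Qed.

Lemma wk_sym Av u v n : wk Av u v n -> wk Av v u n.
Proof.
  induction 1. constructor; auto.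
  eapply wk_snoc; eauto.
Qed.

Lemma dleS_trans Av u v w n m : dleS Av u v n -> dleS Av v w m -> dleS Av u w (n + m).
Proof. intros [a [Ha Hb]] [c [Hc Hd]]. exists (a + c). split. lia. eapply wk_trans; eauto. Qed.
Lemma dleS_sym Av u v n : dleS Av u v n -> dleS Av v u n.
Proof. intros [a [Ha Hb]]. exists a. split; auto. apply wk_sym; auto. Qed.
Lemma dleS_mono Av u v n m : dleS Av u v n -> n <= m -> dleS Av u v m.
Proof. intros [a [Ha Hb]] H. exists a. split; auto. lia. Qed.
Lemma dle_refl u : dle u u 0.
Proof. exists 0. split; auto. constructor. unfold noav; auto. Qed.
Lemma dle_adj u v : adj u v -> dle u v 1.
Proof. intros. exists 1. split; auto. econstructor; eauto. unfold noav; auto. constructor. unfold noav; auto. Qed.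

Lemma wk_avoid Av a b n : wk noav a b n ->
  (forall w n', n' <= n -> wk noav a w n' -> ~ Av w) -> wk Av a b n.
Proof.
  induction 1 as [u H0|u x v n H1 H2 H3 IH]; intros H.
  - constructor. apply (H u 0); auto. constructor. unfold noav; auto.
  - econstructor; eauto. apply (H u 0). lia. constructor. unfold noav; auto.
    apply IH. intros w n' Hn Hw. apply (H w (S n')). lia. econstructor; eauto.
Qed.

Lemma chain_cons_inv x q : chain adj (x :: q) -> chain adj q.
Proof. destruct q; simpl; tauto. Qed.

Lemma chain_app_r q1 q2 : chain adj (q1 ++ q2) -> chain adj q2.
Proof. induction q1; simpl; auto. intros H. apply IHq1. eapply chain_cons_inv; eauto. Qed.

Lemma last_indep (y : V) q d d' : last (y :: q) d = last (y :: q) d'.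
Proof. revert y. induction q; intros; [reflexivity|]. change (last (a::q) d = last (a::q) d'). apply IHq. Qed.

Lemma last_app_cons (q1 q2 : list V) u d : last (q1 ++ u :: q2) d = last (u :: q2) u.
Proof.
  induction q1 as [|a q1 IH]. simpl. apply last_indep.
  rewrite <- IH. simpl app. destruct (q1 ++ u :: q2) eqn:E. destruct q1; discriminate. reflexivity.
Qed.

Lemma last_cons_cons (x y : V) q d : last (x :: y :: q) d = last (y :: q) y.
Proof. change (last (y::q) d = last (y::q) y). apply last_indep. Qed.

Lemma wk_to_path Av u v n : wk Av u v n -> exists q, is_path_from_to adj q u v /\
   path_length q <= n /\ forall x, In x q -> ~ Av x.
Proof.
  induction 1.
  - exists [u]. repeat split; simpl; auto. constructor; auto. constructor. congruence.
    intros x [->|[]]; auto.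
  - destruct IHwk as [q [[Hnd [Hch [Hhd [Hl Hne]]]] [Hlen Hav]]].
    destruct (classic (In u q)) as [Hin|Hnin].
    + apply in_split in Hin. destruct Hin as [q1 [q2 ->]].
      exists (u :: q2). split. split; [|split; [|split; [|split]]].
      * eapply NoDup_app_remove_l; eauto.
      * eapply chain_app_r; eauto.
      * reflexivity.
      * rewrite <- Hl. rewrite last_app_cons. reflexivity.
      * congruence.
      * split. unfold path_length in *. rewrite length_app in Hlen. simpl in *. lia.
        intros y Hy. apply Hav. apply in_or_app. right. auto.
    + exists (u :: q). destruct q as [|y q']; [congruence|]. simpl in Hhd. injection Hhd as ->.
      split. split; [|split; [|split; [|split]]].
      * constructor; auto.
      * simpl. split; auto.
      * reflexivity.
      * rewrite last_cons_cons. auto.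
      * congruence.
      * split. unfold path_length in *. simpl in *. lia.
        intros z [->|Hz]; auto.
Qed.

Lemma path_to_wk Av q u v : is_path_from_to adj q u v -> (forall x, In x q -> ~ Av x) ->
   wk Av u v (path_length q).
Proof.
  intros [_ [Hch [Hhd [Hl Hne]]]]. revert u Hch Hhd Hl Hne. induction q as [|x q IH]; intros u Hch Hhd Hl Hne Hav.
  congruence. simpl in Hhd. injection Hhd as ->.
  destruct q as [|y q'].
  - simpl in *. subst. constructor. apply Hav; simpl; auto.
  - unfold path_length. simpl. simpl in Hch. destruct Hch as [Ha Hc].
    econstructor; eauto. apply Hav; simpl; auto.
    apply (IH y); auto. rewrite <- Hl. rewrite last_cons_cons. auto. congruence.
    intros z Hz. apply Hav. simpl; auto.
Qed.


Lemma exists_dist u v n : wk noav u v n -> exists n0, n0 <= n /\ is_dist adj u v n0.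
Proof.
  revert u v. induction n as [n IH] using (well_founded_induction lt_wf). intros u v H.
  destruct (classic (exists m, m < n /\ wk noav u v m)) as [[m [Hm Hw]]|Hno].
  - destruct (IH m Hm u v Hw) as [n0 [H1 H2]]. exists n0. split; auto. lia.
  - exists n. split; auto. destruct (wk_to_path _ _ _ _ H) as [q [Hq [Hl _]]].
    assert (Hmin : forall p, is_path_from_to adj p u v -> n <= path_length p).
    { intros p Hp. destruct (le_lt_dec n (path_length p)); auto. exfalso. apply Hno.
      exists (path_length p). split; [lia|]. apply path_to_wk; auto. }
    split; auto. exists q. split; auto. specialize (Hmin q Hq). lia.
Qed.

Lemma is_dist_wk u v n : is_dist adj u v n -> wk noav u v n.
Proof. intros [[p [Hp <-]] _]. apply path_to_wk; auto; try (intros; unfold noav; auto). Qed.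

Lemma conn_dist (Hc : connected adj) u v : exists n, is_dist adj u v n.
Proof.
  destruct (Hc u v) as [p Hp]. destruct (exists_dist u v (path_length p)) as [n0 [_ H]].
  apply path_to_wk; auto; try (intros; unfold noav; auto). eauto.
Qed.

Lemma dist_le_of_dle u v n : dle u v n -> dist_le adj u v n.
Proof. intros [a [Ha Hw]]. destruct (wk_to_path _ _ _ _ Hw) as [q [Hq [Hl _]]]. exists q. split; auto. lia. Qed.

Lemma dle_of_dist_le u v n : dist_le adj u v n -> dle u v n.
Proof. intros [q [Hq Hl]]. exists (path_length q). split; auto. apply path_to_wk; auto; try (intros; unfold noav; auto). Qed.

Section Deg.
Context (D : nat) (HD : forall v (l : list V), NoDup l -> (forall w, In w l -> adj v w) -> length l <= D).

Lemma nbrs v : exists l, length l <= D /\ forall w, adj v w -> In w l.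
Proof.
  apply NNPP. intros Hn.
  assert (Hk : forall k, exists l, NoDup l /\ (forall w, In w l -> adj v w) /\ length l = k).
  { induction k as [|k [l [Hnd [Ha Hl]]]].
    - exists []. repeat split; auto. constructor. intros w [].
    - assert (length l <= D) by (apply (HD v); auto).
      destruct (classic (exists w, adj v w /\ ~ In w l)) as [[w [Hw Hwn]]|Hall].
      + exists (w :: l). repeat split. constructor; auto. intros z [->|Hz]; auto. simpl; lia.
      + exfalso. apply Hn. exists l. split; auto. intros w Hw. apply NNPP. intro Hc. apply Hall; eauto. }
  destruct (Hk (S D)) as [l [Hnd [Ha Hl]]]. specialize (HD v l Hnd Ha). lia.
Qed.

Lemma list_choice {A B : Type} (P : A -> list B -> Prop) (M : nat) (xs : list A) :
  (forall x, exists l, length l <= M /\ P x l) ->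
  (forall x l l', incl l l' -> P x l -> P x l') ->
  exists L, length L <= length xs * M /\ forall x, In x xs -> P x L.
Proof.
  intros H Hm. induction xs as [|x xs [L [HL HP]]].
  - exists []. split; simpl; auto. intros _ [].
  - destruct (H x) as [l [Hl Hx]]. exists (l ++ L). split. rewrite length_app; simpl; lia.
    intros y [<-|Hy]. eapply Hm; [|exact Hx]. intros z Hz; apply in_or_app; auto.
    eapply Hm; [|exact (HP y Hy)]. intros z Hz; apply in_or_app; auto.
Qed.

Lemma balls R : forall v, exists l, length l <= (D+1)^R /\ forall w, dle v w R -> In w l.
Proof.
  induction R as [|R IH]; intros v.
  - exists [v]. split. simpl; lia. intros w [n [Hn Hw]]. assert (n = 0) by lia. subst.
    inversion Hw; subst. simpl; auto.
  - destruct (nbrs v) as [l [Hl Hnb]].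
    destruct (list_choice (fun x L => forall w, dle x w R -> In w L) ((D+1)^R) l) as [L [HL HP]].
    + apply IH.
    + intros x l1 l2 Hi Hp w Hw. apply Hi. auto.
    + exists (v :: L). split.
      * simpl length. assert (1 <= (D+1)^R) by (apply Nat.neq_0_lt_0; apply Nat.pow_nonzero; lia).
        rewrite Nat.pow_succ_r'. nia.
      * intros w [n [Hn Hw]]. inversion Hw; subst. simpl; auto.
        right. apply (HP x). auto. exists n0. split. lia. auto.
Qed.

Lemma ball_count v R l : NoDup l -> (forall w, In w l -> dle v w R) -> length l <= (D+1)^R.
Proof.
  intros Hnd Hl. destruct (balls R v) as [B [HB HBin]].
  assert (incl l B) by (intros w Hw; auto). pose proof (NoDup_incl_length Hnd H). lia.
Qed.
End Deg.

End G.
Definition cdec (P : Prop) : bool := if excluded_middle_informative P then true else false.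
Lemma cdec_true P : cdec P = true <-> P.
Proof. unfold cdec. destruct (excluded_middle_informative P); split; intros; auto; try discriminate; contradiction. Qed.
Lemma cdec_false P : cdec P = false <-> ~ P.
Proof. unfold cdec. destruct (excluded_middle_informative P); split; intros; auto; try discriminate; contradiction. Qed.

Lemma filter_orb {A} (b1 b2 : A -> bool) l :
  length (filter (fun x => b1 x || b2 x) l) <= length (filter b1 l) + length (filter b2 l).
Proof. induction l as [|a l IH]; simpl; auto. destruct (b1 a), (b2 a); simpl; lia. Qed.

Lemma NoDup_map_filter {A B} (h : A -> B) (b : A -> bool) l :
  NoDup (map h l) -> NoDup (map h (filter b l)).
Proof.
  induction l as [|a l IH]; simpl; intros H; auto. inversion H; subst.
  destruct (b a); simpl; auto. constructor; auto.
  intros Hin. apply H2. apply in_map_iff in Hin. destruct Hin as [x [Hx Hx2]].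
  apply filter_In in Hx2. apply in_map_iff. exists x. tauto.
Qed.

Lemma count_filter_map {A B} (h : A -> B) (b : A -> bool) l (T : list B) :
  NoDup (map h l) -> (forall x, In x l -> b x = true -> In (h x) T) ->
  length (filter b l) <= length T.
Proof.
  intros Hnd HT. rewrite <- (length_map h). apply NoDup_incl_length.
  apply NoDup_map_filter; auto.
  intros y Hy. apply in_map_iff in Hy. destruct Hy as [x [<- Hx]]. apply filter_In in Hx. apply HT; tauto.
Qed.

Lemma filter_sub {A} (b c : A -> bool) l : length (filter b (filter c l)) <= length (filter b l).
Proof. induction l as [|a l IH]; simpl; auto. destruct (c a) eqn:E1, (b a) eqn:E2; simpl; try rewrite E2; simpl; lia. Qed.

Lemma greedy {A} (confb : A -> A -> bool) (K : nat) :
  (forall x y, confb x y = confb y x) -> (forall x, confb x x = true) ->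
  forall l, NoDup l -> (forall x, In x l -> length (filter (confb x) l) <= K) ->
  exists s, NoDup s /\ incl s l /\ (forall x y, In x s -> In y s -> confb x y = true -> x = y)
     /\ length l <= K * length s.
Proof.
  intros Hsym Hrefl l. induction l as [l IH] using (induction_ltof1 _ (@length A)). unfold ltof in IH.
  destruct l as [|x r]; intros Hnd Hc.
  - exists []. split; [constructor|split; [intros y []|split; [intros y z []|simpl; lia]]].
  - inversion Hnd as [|? ? Hxr Hndr]; subst.
    set (r' := filter (fun y => negb (confb x y)) r).
    assert (Hlr : length r = length (filter (confb x) r) + length r').
    { unfold r'. rewrite <- (filter_length (confb x) r). reflexivity. }
    destruct (IH r') as [s' [Hnd' [Hinc' [Hcf' Hlen']]]].
    + simpl. lia.
    + apply NoDup_filter; auto.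
    + intros y Hy. pose proof (Hc y (or_intror (proj1 (proj1 (filter_In _ _ _) Hy)))).
      pose proof (filter_sub (confb y) (fun y => negb (confb x y)) r). simpl in H.
      fold r' in H0. destruct (confb y x); simpl in H; lia.
    + exists (x :: s'). split; [|split; [|split]].
      * constructor; auto. intros Hin. apply Hxr. apply Hinc' in Hin. unfold r' in Hin. apply filter_In in Hin. tauto.
      * intros y [<-|Hy]. simpl; auto. right. apply Hinc' in Hy. unfold r' in Hy. apply filter_In in Hy. tauto.
      * intros y z [<-|Hy] [<-|Hz] Hyz; auto.
        -- apply Hinc' in Hz. unfold r' in Hz. apply filter_In in Hz. destruct Hz as [_ Hz]. rewrite Hyz in Hz. discriminate.
        -- apply Hinc' in Hy. unfold r' in Hy. apply filter_In in Hy. destruct Hy as [_ Hy]. rewrite Hsym, Hyz in Hy. discriminate.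
      * pose proof (Hc x (or_introl eq_refl)). simpl in H. rewrite Hrefl in H. simpl in H. simpl. nia.
Qed.
Theorem theoremA (V V' : Type) (adj : V -> V -> Prop) (adj' : V' -> V' -> Prop) :
  simple_graph adj -> simple_graph adj' ->
  connected adj -> connected adj' ->
  bounded_degree adj -> bounded_degree adj' ->
  quasi_isometric adj adj' ->
  extraterrestrial adj -> extraterrestrial adj'.
Proof.
  intros [Hs _] [Hs' _] Hc Hc' [D HD] [D' HD'] [f [A [B [C [HA [HB [HC [HQI Hcov]]]]]]]] HE.
  destruct (INR_unbounded (A + B + A*B + C)) as [K HK].
  assert (HKA : (A <= INR K)%R) by nra.
  assert (HKB : (B <= INR K)%R) by nra.
  assert (HKAB : (A * B <= INR K)%R) by nra.
  assert (HKC : (C < INR K)%R) by nra.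
  assert (Q1 : forall x y n, dle adj x y n -> dle adj' (f x) (f y) (K*n+K)).
  { intros x y n [n1 [Hn1 Hw]]. destruct (exists_dist adj x y n1 Hw) as [n0 [Hn0 Hd]].
    destruct (conn_dist adj' Hc' (f x) (f y)) as [n0' Hd'].
    destruct (HQI _ _ _ _ Hd Hd') as [_ Hup]. exists n0'. split; [|apply is_dist_wk; auto].
    assert (INR n0' <= INR (K*n0+K))%R.
    { rewrite plus_INR, mult_INR. pose proof (pos_INR n0). nra. }
    apply INR_le in H. nia. }
  assert (Q2 : forall x y n, dle adj' (f x) (f y) n -> dle adj x y (K*n+K)).
  { intros x y n [n1 [Hn1 Hw]]. destruct (exists_dist adj' (f x) (f y) n1 Hw) as [n0' [Hn0 Hd']].
    destruct (conn_dist adj Hc x y) as [n0 Hd].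
    destruct (HQI _ _ _ _ Hd Hd') as [Hlow _]. exists n0. split; [|apply is_dist_wk; auto].
    assert (INR n0 <= INR (K*n0'+K))%R.
    { rewrite plus_INR, mult_INR. pose proof (pos_INR n0').
      assert (Ht : INR n0 = (A * (INR n0 / A))%R) by (field; lra).
      rewrite Ht. assert (INR n0 / A <= INR n0' + B)%R by lra. nra. }
    apply INR_le in H. nia. }
  assert (Q3 : forall v', exists v, dle adj' v' (f v) K).
  { intros v'. destruct (Hcov v') as [v [n [Hd Hn]]]. exists v. exists n. split.
    assert (INR n < INR K)%R by lra. apply INR_lt in H. lia. apply is_dist_wk; auto. }
  pose (g := fun v' => proj1_sig (constructive_indefinite_description _ (Q3 v'))).
  assert (Hg : forall v', dle adj' v' (f (g v')) K).
  { intros v'. unfold g. apply (proj2_sig (constructive_indefinite_description _ (Q3 v'))). }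
  clearbody g. clear Q3.
  set (L := K*(K+1+K)+K).
  set (R := K + K*L + K + (K*(K*K+K)+K) + (K*K+K)).
  set (NK := (D+1)^K). set (NR := (D'+1)^R).
  assert (HNK : 1 <= NK) by (apply Nat.neq_0_lt_0; apply Nat.pow_nonzero; lia).
  intros m. destruct (HE (4*NK*((m+3)*NR))) as [k0 Hk0]. exists (K*k0+K). intros r'.
  set (r := 2*(K*K+K) + L*r' + K + k0 + 1).
  destruct (Hk0 r) as [U [F [O [HnU [HnF [HnO [HdUF [HdUO [HdFO [HUne [Hcnt [Hmatch Hpath]]]]]]]]]]]].
  destruct Hmatch as [M [HM1 [HM2 [HM3 [HM4 [HM5 HM6]]]]]].
  assert (HP : exists P : list (prod V V), map fst P = U /\ NoDup (map snd P) /\ forall q, In q P -> M (fst q) (snd q)).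
  { assert (forall U1, NoDup U1 -> incl U1 U -> exists P : list (prod V V), map fst P = U1 /\ NoDup (map snd P) /\ forall q, In q P -> M (fst q) (snd q)).
    { induction U1 as [|a U1 IH]; intros Hnd Hinc.
      - exists []. split; auto. split. constructor. intros q [].
      - inversion Hnd as [|? ? Hna Hnd1]; subst. destruct IH as [P1 [E1 [E2 E3]]]; auto.
        intros z Hz; apply Hinc; simpl; auto.
        destruct (HM4 a) as [b Hb]. apply Hinc; simpl; auto.
        exists ((a,b) :: P1). split. simpl; congruence. split.
        + simpl. constructor; auto. intros Hin. apply in_map_iff in Hin.
          destruct Hin as [q [Hq1 Hq2]]. pose proof (E3 q Hq2) as Hm. rewrite Hq1 in Hm.
          pose proof (HM3 _ _ _ Hb Hm). subst. apply Hna. apply in_map; auto.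
        + intros q [<-|Hq0]; simpl; auto. }
    apply H; auto. intros z; auto. }
  destruct HP as [P [HPU [HPnd HPM]]].
  assert (HPnd' : NoDup P) by (apply (NoDup_map_inv fst); rewrite HPU; auto).
  assert (HPq : forall q, In q P -> In (fst q) U /\ In (snd q) O /\ dle adj (fst q) (snd q) k0).
  { intros q Hq. pose proof (HPM q Hq). destruct (HM1 _ _ H). split; auto. split; auto.
    apply dle_of_dist_le. apply HM6; auto. }
  assert (Hsep : forall u o N, In u U -> In o O -> dleS adj (fun w => In w F) u o N -> r <= N).
  { intros u o N Hu Ho [n [Hn Hw]]. destruct (wk_to_path _ _ _ _ _ Hw) as [p [Hp [Hl Hav]]].
    destruct (Hpath p u o Hu Ho Hp) as [[x [Hx1 Hx2]]|Hr]. exfalso; apply (Hav x); auto. lia. }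
  assert (HFne : exists w0, In w0 F).
  { destruct P as [|q P0]. simpl in HPU. subst. congruence.
    destruct (HPq q (or_introl eq_refl)) as [Hu [Ho [n [Hn Hw]]]].
    destruct (wk_to_path _ _ _ _ _ Hw) as [p [Hp [Hl _]]].
    destruct (Hpath p _ _ Hu Ho Hp) as [[x [Hx1 Hx2]]|Hr]. eauto. unfold r in Hr. lia. }
  destruct HFne as [w0 Hw0].
  destruct (list_choice (fun w Bl => forall z, dle adj' (f w) z R -> In z Bl) NR F) as [Bl [HBl HBin]].
  { intros w. apply (balls adj' Hs' D' HD' R (f w)). }
  { intros w l l' Hi Hp z Hz. apply Hi; auto. }
  pose (eqd := fun x y : V' => excluded_middle_informative (x = y)).
  set (F' := nodup eqd Bl).
  assert (HF'nd : NoDup F') by apply NoDup_nodup.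
  assert (HF'in : forall w, In w F -> forall z, dle adj' (f w) z R -> In z F').
  { intros w Hw z Hz. apply nodup_In. apply (HBin w Hw z Hz). }
  assert (HF'len : length F' <= length F * NR).
  { assert (Hi : incl F' Bl) by (intros z Hz; apply nodup_In in Hz; auto). pose proof (NoDup_incl_length HF'nd Hi). lia. }
  assert (HF'pos : 1 <= length F').
  { destruct F' as [|a l] eqn:E. exfalso. apply (HF'in w0 Hw0 (f w0)). apply (dleS_mono adj' _ _ _ 0); [apply dle_refl|lia]. simpl; lia. }
  clearbody F'.
  assert (avoid_gen : forall x' a b N e, ~ In x' F' -> dle adj' x' (f a) e -> dle adj a b N ->
            e + (K*N+K) <= R -> dleS adj (fun w => In w F) a b N).
  { intros x' a b N e Hx' Hxa [n [Hn Hw]] HR. exists n. split; auto. apply wk_avoid; auto.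
    intros w n' Hn' Hw' HwF. apply Hx'. apply (HF'in w HwF).
    apply (dleS_sym adj' Hs'). apply (dleS_mono adj' _ _ _ (e + (K*N+K))); auto.
    apply (dleS_trans adj' _ _ (f a)); auto. apply Q1. exists n'. split; auto. lia. }
  assert (Hfeq : forall x y, f x = f y -> dle adj x y K).
  { intros x y Hxy. apply (dleS_mono adj _ _ _ (K*0+K)); [|lia]. apply Q2. rewrite Hxy.
    apply dle_refl. }
  assert (cnt : forall (h : prod V V -> V) (b : prod V V -> bool) v, NoDup (map h P) ->
             (forall q, In q P -> b q = true -> dle adj v (h q) K) -> length (filter b P) <= NK).
  { intros h b v Hnd Hq. rewrite <- (length_map h). apply (ball_count adj Hs D HD v K).
    apply NoDup_map_filter; auto.
    intros w Hw. apply in_map_iff in Hw. destruct Hw as [q [<- Hq2]]. apply filter_In in Hq2.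
    destruct Hq2; auto. }
  assert (HPfst : NoDup (map fst P)) by (rewrite HPU; auto).
  pose (c1 := fun p q : prod V V => cdec (f (fst p) = f (fst q))).
  pose (c2 := fun p q : prod V V => cdec (f (fst p) = f (snd q))).
  pose (c3 := fun p q : prod V V => cdec (f (snd p) = f (fst q))).
  pose (c4 := fun p q : prod V V => cdec (f (snd p) = f (snd q))).
  pose (confb := fun p q => c1 p q || c2 p q || c3 p q || c4 p q).
  assert (Hconf : forall p q, confb p q = true <-> (f (fst p) = f (fst q) \/ f (fst p) = f (snd q)
                    \/ f (snd p) = f (fst q) \/ f (snd p) = f (snd q))).
  { intros p q. unfold confb, c1, c2, c3, c4. rewrite !Bool.orb_true_iff, !cdec_true. tauto. }
  assert (Hcsym : forall p q, confb p q = confb q p).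
  { intros p q. apply Bool.eq_true_iff_eq. rewrite !Hconf. intuition congruence. }
  assert (Hcrefl : forall p, confb p p = true).
  { intros p. apply Hconf. auto. }
  assert (Hcount : forall p, In p P -> length (filter (confb p) P) <= 4 * NK).
  { intros p Hp.
    pose proof (filter_orb (fun q => c1 p q || c2 p q || c3 p q) (c4 p) P) as E1.
    pose proof (filter_orb (fun q => c1 p q || c2 p q) (c3 p) P) as E2.
    pose proof (filter_orb (c1 p) (c2 p) P) as E3.
    assert (length (filter (c1 p) P) <= NK).
    { apply (cnt fst (c1 p) (fst p)); auto. intros q _ Hq. apply Hfeq. unfold c1, c2, c3, c4 in Hq. apply (proj1 (cdec_true _)) in Hq. auto. }
    assert (length (filter (c2 p) P) <= NK).
    { apply (cnt snd (c2 p) (fst p)); auto. intros q _ Hq. apply Hfeq. unfold c1, c2, c3, c4 in Hq. apply (proj1 (cdec_true _)) in Hq. auto. }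
    assert (length (filter (c3 p) P) <= NK).
    { apply (cnt fst (c3 p) (snd p)); auto. intros q _ Hq. apply Hfeq. unfold c1, c2, c3, c4 in Hq. apply (proj1 (cdec_true _)) in Hq. auto. }
    assert (length (filter (c4 p) P) <= NK).
    { apply (cnt snd (c4 p) (snd p)); auto. intros q _ Hq. apply Hfeq. unfold c1, c2, c3, c4 in Hq. apply (proj1 (cdec_true _)) in Hq. auto. }
    unfold confb. lia. }
  destruct (greedy confb (4*NK) Hcsym Hcrefl P HPnd' Hcount) as [S [HSnd [HSinc [HScf HSlen]]]].
  assert (HScf' : forall x y, In x S -> In y S -> (f (fst x) = f (fst y) \/ f (fst x) = f (snd y)
                    \/ f (snd x) = f (fst y) \/ f (snd x) = f (snd y)) -> x = y).
  { intros x y Hx Hy H. apply HScf; auto. apply Hconf; auto. }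
  pose (b1 := fun q : prod V V => cdec (In (f (fst q)) F')).
  pose (b2 := fun q : prod V V => cdec (In (f (snd q)) F')).
  pose (bb := fun q => b1 q || b2 q).
  pose (S' := filter (fun q => negb (bb q)) S).
  assert (HS'in : forall q, In q S' <-> In q S /\ ~ In (f (fst q)) F' /\ ~ In (f (snd q)) F').
  { intros q. unfold S', bb, b1, b2. rewrite filter_In, Bool.negb_true_iff, Bool.orb_false_iff, !cdec_false. tauto. }
  assert (HSmap1 : NoDup (map (fun q => f (fst q)) S)).
  { apply NoDup_map_NoDup_ForallPairs; auto. intros x y Hx Hy H. apply HScf'; auto. }
  assert (HSmap2 : NoDup (map (fun q => f (snd q)) S)).
  { apply NoDup_map_NoDup_ForallPairs; auto. intros x y Hx Hy H. apply HScf'; auto. }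
  assert (Hsplit : length S <= length S' + length F' + length F').
  { pose proof (filter_length bb S) as E1. pose proof (filter_orb b1 b2 S) as E2.
    assert (length (filter b1 S) <= length F').
    { apply (count_filter_map (fun q => f (fst q))); auto. intros x _ Hx. apply (proj1 (cdec_true _)) in Hx; auto. }
    assert (length (filter b2 S) <= length F').
    { apply (count_filter_map (fun q => f (snd q))); auto. intros x _ Hx. apply (proj1 (cdec_true _)) in Hx; auto. }
    unfold S'. unfold bb in E1 at 1. lia. }
  assert (HlenP : length P = length U) by (rewrite <- HPU, length_map; auto).
  assert (HS1 : (m+3)*NR*length F <= length S).
  { apply (Nat.mul_le_mono_pos_l _ _ (4*NK)). lia. nia. }
  assert (HS2 : (m+1) * length F' <= length S') by nia.
  assert (HS'nd : NoDup S') by (apply NoDup_filter; auto).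
  clearbody S'.
  assert (HS'S : forall q, In q S' -> In q S) by (intros q Hq; apply HS'in in Hq; tauto).
  assert (Hfuo : forall q, In q S' -> f (fst q) <> f (snd q)).
  { intros q Hq Heq. destruct (proj1 (HS'in q) Hq) as [HqS [Hn1 _]].
    destruct (HPq q (HSinc _ HqS)) as [Hu [Ho _]].
    pose proof (avoid_gen (f (fst q)) (fst q) (snd q) K 0 Hn1 (dle_refl adj' _) (Hfeq _ _ Heq)
      ltac:(unfold R; lia)) as H.
    pose proof (Hsep _ _ _ Hu Ho H). unfold r in H0. lia. }
  assert (Htr : forall x' y' n, wk adj' (fun z => In z F') x' y' n ->
             dleS adj (fun w => In w F) (g x') (g y') (L*n)).
  { induction 1 as [u0 Hu0 | u0 x v n Hadj Hu0 Hw IH].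
    - destruct (avoid_gen u0 (g u0) (g u0) 0 K Hu0 (Hg u0) (dle_refl adj (g u0))
        ltac:(unfold R; lia)) as [n [Hn Hw]]. exists n. split; auto. lia.
    - assert (Hxy : dle adj (g u0) (g x) L).
      { eapply dleS_mono. apply Q2. apply (dleS_trans adj' _ _ u0). apply (dleS_sym adj' Hs'); apply Hg.
        apply (dleS_trans adj' _ _ x). apply dle_adj; auto. apply Hg. unfold L; lia. }
      pose proof (avoid_gen u0 (g u0) (g x) L K Hu0 (Hg u0) Hxy ltac:(unfold R; lia)) as H1.
      eapply dleS_mono. eapply dleS_trans; eauto. nia. }
  exists (map (fun q => f (fst q)) S'), F', (map (fun q => f (snd q)) S').
  unfold is_UFO. split; [|split; [|split; [|split; [|split; [|split; [|split; [|split; [|split]]]]]]]].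
  - apply NoDup_map_NoDup_ForallPairs; auto. intros x y Hx Hy H. apply HScf'; auto.
  - auto.
  - apply NoDup_map_NoDup_ForallPairs; auto. intros x y Hx Hy H. apply HScf'; auto.
  - intros a Ha. apply in_map_iff in Ha. destruct Ha as [q [<- Hq]]. apply HS'in in Hq. tauto.
  - intros a Ha Hb. apply in_map_iff in Ha. destruct Ha as [q1 [<- Hq1]].
    apply in_map_iff in Hb. destruct Hb as [q2 [Heq Hq2]].
    assert (q1 = q2) by (apply HScf'; auto). subst. apply (Hfuo q2); auto.
  - intros a Ha Hb. apply in_map_iff in Hb. destruct Hb as [q [<- Hq]]. apply HS'in in Hq. tauto.
  - intros E. apply (f_equal (@length _)) in E. rewrite length_map in E. simpl in E. nia.
  - rewrite length_map. nia.
  - exists (fun a b => exists q, In q S' /\ a = f (fst q) /\ b = f (snd q)).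
    split; [|split; [|split; [|split; [|split]]]].
    + intros a b [q [Hq [-> ->]]]. split; apply (in_map (fun q => _) S' q Hq).
    + intros a b b' [q [Hq [-> ->]]] [q' [Hq' [Heq ->]]].
      assert (q = q') by (apply HScf'; auto). subst; auto.
    + intros a a' b [q [Hq [-> ->]]] [q' [Hq' [-> Heq]]].
      assert (q = q') by (apply HScf'; auto). subst; auto.
    + intros a Ha. apply in_map_iff in Ha. destruct Ha as [q [<- Hq]]. eauto.
    + intros b Hb. apply in_map_iff in Hb. destruct Hb as [q [<- Hq]]. eauto.
    + intros a b [q [Hq [-> ->]]]. apply dist_le_of_dle. apply Q1. apply HPq. auto.
  - intros p u' o' Hu' Ho' Hp.
    destruct (classic (exists x, In x p /\ In x F')) as [H|Hno]; [left; auto|right].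
    destruct (le_lt_dec r' (path_length p)) as [Hle|Hlt]; auto. exfalso.
    apply in_map_iff in Hu'. destruct Hu' as [q1 [<- Hq1]].
    apply in_map_iff in Ho'. destruct Ho' as [q2 [<- Hq2]].
    destruct (proj1 (HS'in q1) Hq1) as [HqS1 [Hn1 _]].
    destruct (proj1 (HS'in q2) Hq2) as [HqS2 [_ Hn2]].
    destruct (HPq q1 (HSinc _ HqS1)) as [Hu _].
    destruct (HPq q2 (HSinc _ HqS2)) as [_ [Ho _]].
    assert (Hw : wk adj' (fun z => In z F') (f (fst q1)) (f (snd q2)) (path_length p)).
    { apply path_to_wk; auto. intros x Hx Hx'. apply Hno; eauto. }
    pose proof (Htr _ _ _ Hw) as Hmid.
    assert (Hus : dleS adj (fun w => In w F) (fst q1) (g (f (fst q1))) (K*K+K)).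
    { apply (avoid_gen (f (fst q1)) _ _ _ 0 Hn1 (dle_refl adj' _)). apply Q2. apply Hg. unfold R; lia. }
    assert (Hos : dleS adj (fun w => In w F) (snd q2) (g (f (snd q2))) (K*K+K)).
    { apply (avoid_gen (f (snd q2)) _ _ _ 0 Hn2 (dle_refl adj' _)). apply Q2. apply Hg. unfold R; lia. }
    pose proof (dleS_trans adj _ _ _ _ _ _ (dleS_trans adj _ _ _ _ _ _ Hus Hmid) (dleS_sym adj Hs _ _ _ _ Hos)) as Htot.
    pose proof (Hsep _ _ _ Hu Ho Htot). unfold r in H. nia.
Qed.
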